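(* Read's space $\mathcal R=(c_0,|||\cdot|||)$ is not locally uniformly rotund: there exist $x$ with $|||x|||=1$ and a sequence $(x_n)$ with $|||x_n|||=1$ and $|||x+x_n|||\to2$ such that $(x_n)$ does not converge to $x$ in norm.
   Context: Let $c_{00}(\mathbb Q)$ be the set of finitely supported sequences with rational coefficients, and let $(u_n)_{n\in\mathbb N}$ be a sequence in $c_{00}(\mathbb Q)$ which lists every element of $c_{00}(\mathbb Q)$ infinitely many times. Let $(a_n)_{n\in\mathbb N}$ be a strictly increasing sequence of positive integers with $a_n>\max\operatorname{supp} u_n$ and $a_n>\|u_n\|_1$ for every $n$. $(e_n)$ denotes the canonical unit vectors and $\langle x,y\rangle=\sum_n x_ny_n$. Read's norm on $c_0$ is $|||x||| = \|x\|_\infty + \sum_{n} 2^{-a_n^2}|\langle x, u_n - e_{a_n}\rangle|$, and Read's space is $\mathcal R=(c_0,|||\cdot|||)$ (real scalars). A Banach space is locally uniformly rotund if for every $x$ in the unit sphere and every sequence $(x_n)$ in the unit sphere with $\|x+x_n\|\to 2$ one has $\|x_n-x\|\to0$. *)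

(* Defs.v *)
From HB Require Import structures.
From mathcomp Require Import all_boot all_order all_algebra.
From mathcomp Require Import all_classical all_reals all_analysis.
Set Implicit Arguments. Unset Strict Implicit. Unset Printing Implicit Defensive.
Import Order.TTheory GRing.Theory Num.Theory.
Import numFieldNormedType.Exports.
Local Open Scope classical_set_scope.
Local Open Scope ring_scope.

Definition c0 (R : realType) : set (nat -> R) :=
  [set x | x i @[i --> \oo] --> (0 : R)].

Definition supnorm (R : realType) (x : nat -> R) : R :=
  sup (range (fun i => `|x i|)).

(* <x, u_n - e_{a_n}> ; u_n (rational, supported in [0, a_n)) *)
Definition read_inner (R : realType) (a : nat -> nat) (u : nat -> nat -> rat)
    (x : nat -> R) (n : nat) : R :=
  \sum_(i < a n) x i * ratr (u n i) - x (a n).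

Definition read_norm (R : realType) (a : nat -> nat) (u : nat -> nat -> rat)
    (x : nat -> R) : R :=
  supnorm x +
  limn (fun N => \sum_(0 <= n < N) ((2 : R) ^- (a n ^ 2) * `|read_inner a u x n|)).

Definition LUR (R : realType) (V : set (nat -> R)) (N : (nat -> R) -> R) : Prop :=
  forall x, V x -> N x = 1 ->
  forall xs : nat -> nat -> R, (forall n, V (xs n)) -> (forall n, N (xs n) = 1) ->
  N (fun i => x i + xs n i) @[n --> \oo] --> (2 : R) ->
  N (fun i => xs n i - x i) @[n --> \oo] --> (0 : R).

(* Main.v *)
Require Import Defs.
From HB Require Import structures.
From mathcomp Require Import all_boot all_order all_algebra.
From mathcomp Require Import all_classical all_reals all_analysis.
From mathcomp Require Import ring lra zify.
Import Order.TTheory GRing.Theory Num.Theory.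
Import numFieldNormedType.Exports.
Set Implicit Arguments. Unset Strict Implicit. Unset Printing Implicit Defensive.
Local Open Scope ring_scope.

Definition Tm (R : realType) (a : nat -> nat) (u : nat -> nat -> rat)
  (z : nat -> R) (k : nat) : R := (2:R) ^- (a k ^ 2) * `|read_inner a u z k|.
Definition Sm (R : realType) a u (z : nat -> R) (N : nat) : R :=
  \sum_(0 <= k < N) Tm a u z k.
Definition Pm (R : realType) a u (z : nat -> R) : R := limn (Sm a u z).

Lemma read_normE (R : realType) a u (z : nat -> R) :
  read_norm a u z = supnorm z + Pm a u z.
Proof. by []. Qed.

Lemma natA (k m a : nat) : (k < a)%N -> (m <= a)%N ->
  ((a + 1) * 2 ^ (k + m) <= 2 ^ (a ^ 2 + 2))%N.
Proof.
move=> hk hm.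
have h1 : (a + 1 <= 2 ^ a)%N by rewrite addn1; apply: ltn_expl.
apply: (@leq_trans (2 ^ a * 2 ^ (k + m))).
  by rewrite leq_mul2r h1 orbT.
rewrite -expnD leq_pexp2l //. nia.
Qed.

Lemma a_gt (a : nat -> nat) (Ha_pos : forall n, (0 < a n)%N)
  (Ha_incr : forall n, (a n < a n.+1)%N) k : (k < a k)%N.
Proof.
elim: k => [|k IH]; first exact: Ha_pos.
exact: (leq_ltn_trans IH (Ha_incr k)).
Qed.

Lemma read_inner_lin (R : realType) a u (z w v : nat -> R) (c d : R) k :
  (forall i, z i = c * w i + d * v i) ->
  read_inner a u z k = c * read_inner a u w k + d * read_inner a u v k.
Proof.
move=> Hz; rewrite /read_inner.
under eq_bigr do rewrite Hz mulrDl -!mulrA.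
rewrite big_split /= -!mulr_sumr Hz. ring.
Qed.

Lemma Tm_ge0 (R : realType) a u (z : nat -> R) k : 0 <= Tm a u z k.
Proof. by rewrite /Tm mulr_ge0 // invr_ge0 exprn_ge0. Qed.

Lemma Tm_bound (R : realType) (u : nat -> nat -> rat) (a : nat -> nat)
  (Ha_pos : forall n, (0 < a n)%N)
  (Ha_incr : forall n, (a n < a n.+1)%N)
  (Ha_l1 : forall n, \sum_(i < a n) `|u n i| < (a n)%:R)
  (z : nat -> R) (B : R) (m k : nat) :
  (forall i, `|z i| <= B) -> (forall i, (i < m)%N -> z i = 0) ->
  Tm a u z k <= 4 * B * (2^-1) ^+ m * (2^-1) ^+ k.
Proof.
move=> hB hz.
have B0 : 0 <= B by apply: le_trans (hB 0%N).
have rhs0 : 0 <= 4 * B * (2^-1) ^+ m * (2^-1 : R) ^+ k.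
  by rewrite !mulr_ge0 // exprn_ge0 // invr_ge0.
case: (ltnP (a k) m) => hm.
  rewrite /Tm /read_inner big1 ?hz // ?sub0r ?normrN ?normr0 ?mulr0 //.
  by move=> i _; rewrite hz ?mul0r // (ltn_trans (ltn_ord i) hm).
have hk := a_gt Ha_pos Ha_incr k.
have hn := natA hk hm.
have hsum : \sum_(i < a k) `|(ratr (u k i) : R)| <= (a k)%:R.
  have := Ha_l1 k.
  rewrite -(ltr_rat R) rmorph_sum /= ratr_nat => /ltW.
  by under eq_bigr do rewrite ratr_norm.
have hri : `|read_inner a u z k| <= B * ((a k)%:R + 1).
  rewrite /read_inner.
  apply: le_trans (ler_normB _ _) _.
  rewrite mulrDr mulr1 lerD // ?hB //.
  apply: le_trans (ler_norm_sum _ _ _) _.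
  apply: (@le_trans _ _ (\sum_(i < a k) B * `|(ratr (u k i) : R)|)).
    by apply: ler_sum => i _; rewrite normrM ler_wpM2r.
  by rewrite -mulr_sumr ler_wpM2l.
rewrite /Tm.
have hR : ((a k + 1) * 2 ^ (k + m))%:R <= (2 ^ (a k ^ 2 + 2))%:R :> R by rewrite ler_nat.
rewrite natrM !natrX natrD in hR.
set A := (2:R) ^+ (a k ^ 2).
set K := (2:R) ^+ (k + m).
have hR2 : ((a k)%:R + 1) * K <= A * 4.
  have e4 : (2:R) ^+ 2 = 4 by rewrite expr2; lra.
  by rewrite /A /K -e4 -exprD.
have A0 : 0 < A by rewrite exprn_gt0.
have K0 : 0 < K by rewrite exprn_gt0.
rewrite -mulrA -exprD exprVn addnC -/K.
apply: (@le_trans _ _ (A^-1 * (B * ((a k)%:R + 1)))).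
  by rewrite ler_wpM2l // invr_ge0 ltW.
rewrite ler_pdivrMl // mulrA ler_pdivlMr //.
nra.
Qed.

Lemma geom_sum (R : realType) N :
  \sum_(0 <= k < N) (2^-1 : R) ^+ k + 2 * (2^-1) ^+ N = 2.
Proof.
elim: N => [|N IH]; first by rewrite big_nil expr0 add0r mulr1.
rewrite big_nat_recr //= -addrA exprS mulrA (_ : (2:R) * 2^-1 = 1); last first.
  by rewrite divff.
rewrite mul1r; lra.
Qed.

Lemma Sm_nd (R : realType) a u (z : nat -> R) :
  {homo Sm a u z : n m / (n <= m)%N >-> n <= m}.
Proof.
move=> n m nm; rewrite /Sm (@big_cat_nat _ _ _ n 0 m _ _ (leq0n n) nm) /= lerDl.
by apply: sumr_ge0 => i _; apply: Tm_ge0.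
Qed.

Section S.
Variables (R : realType) (u : nat -> nat -> rat) (a : nat -> nat)
  (Ha_pos : forall n, (0 < a n)%N)
  (Ha_incr : forall n, (a n < a n.+1)%N)
  (Ha_l1 : forall n, \sum_(i < a n) `|u n i| < (a n)%:R).

Lemma Sm_bound (z : nat -> R) (B : R) (m N : nat) :
  (forall i, `|z i| <= B) -> (forall i, (i < m)%N -> z i = 0) ->
  Sm a u z N <= 8 * B * (2^-1) ^+ m.
Proof.
move=> hB hz.
have B0 : 0 <= B by apply: le_trans (hB 0%N).
apply: (@le_trans _ _ (\sum_(0 <= k < N) 4 * B * (2^-1) ^+ m * (2^-1) ^+ k)).
  by apply: ler_sum => k _; apply: (Tm_bound Ha_pos Ha_incr Ha_l1).
rewrite -mulr_sumr.
have := geom_sum R N.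
have : 0 <= (2^-1 : R) ^+ N by rewrite exprn_ge0 // invr_ge0.
have : 0 <= 4 * B * (2^-1 : R) ^+ m by rewrite !mulr_ge0 // exprn_ge0 // invr_ge0.
nra.
Qed.

Lemma Pm_cvg (z : nat -> R) (B : R) :
  (forall i, `|z i| <= B) -> cvgn (Sm a u z).
Proof.
move=> hB; apply: nondecreasing_is_cvgn; first exact: Sm_nd.
exists (8 * B * (2^-1) ^+ 0) => _ [N _ <-].
by apply: (Sm_bound (m := 0)).
Qed.

Lemma Pm_ge0 (z : nat -> R) (B : R) :
  (forall i, `|z i| <= B) -> 0 <= Pm a u z.
Proof.
move=> hB; apply: le_trans (nondecreasing_cvgn_le (Sm_nd a u z) (Pm_cvg hB) 0).
by rewrite /Sm big_nil.
Qed.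

Lemma Pm_le (z : nat -> R) (B : R) (m : nat) :
  (forall i, `|z i| <= B) -> (forall i, (i < m)%N -> z i = 0) ->
  Pm a u z <= 8 * B * (2^-1) ^+ m.
Proof.
move=> hB hz; apply: limr_le; first exact: Pm_cvg hB.
by near=> N; apply: Sm_bound.
Unshelve. all: end_near.
Qed.

Lemma Pm_sub (z w v : nat -> R) Bw Bv :
  (forall i, `|w i| <= Bw) -> (forall i, `|v i| <= Bv) ->
  (forall i, z i = w i + v i) -> Pm a u z <= Pm a u w + Pm a u v.
Proof.
move=> hw hv hz.
have hz' : forall i, `|z i| <= Bw + Bv.
  by move=> i; rewrite hz (le_trans (ler_normD _ _)) // lerD.
rewrite /Pm -limD; [|exact: Pm_cvg hw|exact: Pm_cvg hv].
apply: ler_lim; [exact: Pm_cvg hz'| |].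
  by apply: is_cvgD; [exact: Pm_cvg hw|exact: Pm_cvg hv].
near=> N; rewrite (_ : (Sm a u w + Sm a u v) N = Sm a u w N + Sm a u v N) //.
rewrite /Sm -big_split /=; apply: ler_sum => k _.
rewrite /Tm -mulrDr ler_wpM2l ?invr_ge0 ?exprn_ge0 //.
rewrite (@read_inner_lin _ a u z w v 1 1); last by move=> i; rewrite !mul1r hz.
by rewrite !mul1r ler_normD.
Unshelve. all: end_near.
Qed.

Lemma Pm_scale (z w : nat -> R) (c : R) Bw :
  (forall i, `|w i| <= Bw) ->
  (forall i, z i = c * w i) -> Pm a u z = `|c| * Pm a u w.
Proof.
move=> hw hz.
rewrite /Pm.
have -> : Sm a u z = `|c| *: Sm a u w.
  apply/funext => N; rewrite (_ : (`|c| *: Sm a u w) N = `|c| * Sm a u w N) //.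
  rewrite /Sm mulr_sumr; apply: eq_bigr => k _.
  rewrite /Tm (@read_inner_lin _ a u z w w c 0); last by move=> i; rewrite mul0r addr0.
  by rewrite mul0r addr0 normrM mulrCA.
by rewrite limZl_tmp //; exact: Pm_cvg hw.
Qed.
End S.

Lemma supnorm_ge (R : realType) (z : nat -> R) B j :
  (forall i, `|z i| <= B) -> `|z j| <= supnorm z.
Proof.
move=> hB; apply: (ub_le_sup (E := range (fun i => `|z i|))); last by exists j.
by exists B => _ [i _ <-].
Qed.

Lemma supnorm_max (R : realType) (z : nat -> R) j :
  (forall i, `|z i| <= `|z j|) -> supnorm z = `|z j|.
Proof.
move=> hB; apply/le_anti/andP; split; last exact: (supnorm_ge j hB).
apply: ge_sup; first by exists `|z j|, j.
by move=> _ [i _ <-].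
Qed.

Definition V (R : realType) (p q : R) (m : nat) : nat -> R :=
  fun i => p * (if i == 0%N then 1 else 0) + q * (if i == m then 1 else 0).

Lemma V0 (R : realType) (p q : R) m : (0 < m)%N -> V p q m 0 = p.
Proof. by move=> hm; rewrite /V eqxx (_ : (0 == m)%N = false) ?mulr1 ?mulr0 ?addr0 //; lia. Qed.

Lemma Vm (R : realType) (p q : R) m : (0 < m)%N -> V p q m m = q.
Proof. by move=> hm; rewrite /V eqxx (_ : (m == 0)%N = false) ?mulr1 ?mulr0 ?add0r //; lia. Qed.

Lemma Vle (R : realType) (p q : R) m i : (0 < m)%N -> `|q| <= `|p| -> `|V p q m i| <= `|p|.
Proof.
move=> hm hq; rewrite /V; case: eqP => [->|h0].
  by rewrite (_ : (0 == m)%N = false) ?mulr1 ?mulr0 ?addr0 //; lia.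
by case: eqP => _; rewrite ?mulr1 ?mulr0 ?add0r ?addr0 ?normr0.
Qed.

Lemma Vle2 (R : realType) (p q : R) m i : `|V p q m i| <= `|p| + `|q|.
Proof.
rewrite /V; apply: le_trans (ler_normD _ _) _.
by apply: lerD; case: eqP => _; rewrite ?mulr1 ?mulr0 ?normr0.
Qed.

Lemma Vlow (R : realType) (q : R) m i : (i < m)%N -> V 0 q m i = 0.
Proof. by move=> h; rewrite /V mul0r add0r (_ : (i == m) = false) ?mulr0 //; lia. Qed.

Lemma Vlin (R : realType) (p q p' q' c d : R) m i :
  V p q m i = c * V p' 0 m i + d * V 0 q' m i -> True.
Proof. by []. Qed.

Lemma Vcomb (R : realType) (p q p1 q1 p2 q2 : R) m i :
  p = p1 + p2 -> q = q1 + q2 -> V p q m i = V p1 q1 m i + V p2 q2 m i.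
Proof. move=> -> ->; rewrite /V; ring. Qed.

Lemma Vscale (R : realType) (c p q : R) m i :
  V (c * p) (c * q) m i = c * V p q m i.
Proof. rewrite /V; ring. Qed.

Lemma near_eventually (P : nat -> Prop) N :
  (forall n, (N <= n)%N -> P n) -> (\forall n \near \oo, P n)%classic.
Proof. by move=> h; exists N. Qed.

Lemma V_c0 (R : realType) (p q : R) m : c0 (V p q m).
Proof.
rewrite /c0 /=.
apply: cvg_near_cst.
apply: (@near_eventually _ m.+1) => i hi.
have h1 : (i == 0)%N = false by apply/eqP; lia.
have h2 : (i == m)%N = false by apply/eqP; lia.
by rewrite /V h1 h2 !mulr0 addr0.
Qed.

Lemma VB (R : realType) (p q : R) m : forall i, `|V p q m i| <= `|p| + `|q|.
Proof. by move=> i; apply: Vle2. Qed.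

Section M.
Variables (R : realType) (u : nat -> nat -> rat) (a : nat -> nat)
  (Ha_pos : forall n, (0 < a n)%N)
  (Ha_incr : forall n, (a n < a n.+1)%N)
  (Ha_l1 : forall n, \sum_(i < a n) `|u n i| < (a n)%:R).

Local Notation P := (Pm a u).

Lemma P_V10 m m' : P (V 1 0 m) = P (V (1:R) 0 m').
Proof.
rewrite (@Pm_scale _ u a Ha_pos Ha_incr Ha_l1 _ (V 1 0 m') 1 (`|1:R| + `|0:R|)).
- by rewrite normr1 mul1r.
- exact: VB.
- by move=> i; rewrite mul1r /V !mul0r.
Qed.

Lemma P_eps m : P (V 0 1 m) <= 8 * (2^-1) ^+ m :> R.
Proof.
have := Pm_le Ha_pos Ha_incr Ha_l1 (VB (0:R) 1 m) (m := m).
rewrite normr0 normr1 add0r mulr1; apply.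
by move=> i hi; apply: Vlow.
Qed.

Lemma P_tri (p q p1 q1 p2 q2 : R) m : p = p1 + p2 -> q = q1 + q2 ->
  P (V p q m) <= P (V p1 q1 m) + P (V p2 q2 m).
Proof.
move=> hp hq; apply: (Pm_sub Ha_pos Ha_incr Ha_l1 (VB p1 q1 m) (VB p2 q2 m)).
by move=> i; apply: Vcomb.
Qed.

Lemma P_sc (p q c : R) m : P (V (c * p) (c * q) m) = `|c| * P (V p q m).
Proof.
apply: (@Pm_scale _ u a Ha_pos Ha_incr Ha_l1 _ _ c _ (VB p q m)).
by move=> i; rewrite Vscale.
Qed.

Lemma P_Vpq (p q : R) m : P (V p q m) <= `|p| * P (V 1 0 m) + `|q| * P (V 0 1 m).
Proof.
rewrite -!P_sc !mulr1 !mulr0; apply: P_tri; by rewrite ?addr0 ?add0r.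
Qed.

Lemma P_V_ge0 (p q : R) m : 0 <= P (V p q m).
Proof. exact: (Pm_ge0 Ha_pos Ha_incr Ha_l1 (VB p q m)). Qed.

End M.

Lemma supV (R : realType) (p q : R) m : (0 < m)%N -> `|q| <= `|p| -> supnorm (V p q m) = `|p|.
Proof.
move=> hm hq; rewrite (@supnorm_max _ _ 0%N); first by rewrite V0.
by move=> i; rewrite V0 //; exact: Vle.
Qed.

Lemma supV_ge (R : realType) (p q : R) m : (0 < m)%N -> `|q| <= supnorm (V p q m).
Proof.
move=> hm; rewrite -{1}(Vm p q hm); apply: supnorm_ge; exact: VB.
Qed.

Unset Implicit Arguments.
Theorem mainTheorem10 (R : realType) (u : nat -> nat -> rat) (a : nat -> nat)
  (Hu_c00 : forall n, exists M, forall i, (M <= i)%N -> u n i = 0)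
  (Hu_enum : forall (s : seq rat) (N : nat),
      exists n, (N <= n)%N /\ forall i, u n i = nth 0 s i)
  (Ha_pos : forall n, (0 < a n)%N)
  (Ha_incr : forall n, (a n < a n.+1)%N)
  (Ha_supp : forall n i, (a n <= i)%N -> u n i = 0)
  (Ha_l1 : forall n, \sum_(i < a n) `|u n i| < (a n)%:R) :
  ~ LUR (@c0 R) (read_norm a u).
Proof.
move=> H.
have P0 := P_V_ge0 Ha_pos Ha_incr Ha_l1 (R:=R).
have Psc := P_sc Ha_pos Ha_incr Ha_l1 (R:=R).
have Ptri := P_tri Ha_pos Ha_incr Ha_l1 (R:=R).
have Pvpq := P_Vpq Ha_pos Ha_incr Ha_l1 (R:=R).
have Peps := P_eps R Ha_pos Ha_incr Ha_l1.
set p := Pm a u (V (1:R) 0 1).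
have pm : forall m, Pm a u (V (1:R) 0 m) = p.
  by move=> m; rewrite /p (P_V10 R Ha_pos Ha_incr Ha_l1 m 1).
have p0 : 0 <= p by apply: P0.
have p8 : p <= 8.
  have := Pm_le Ha_pos Ha_incr Ha_l1 (VB (1:R) 0 1) (m := 0).
  rewrite normr1 normr0 addr0 expr0 !mulr1; apply => i; by [].
set c := (1 + p)^-1.
have cpos : 0 < c by rewrite invr_gt0; lra.
have hc : c * (1 + p) = 1 by rewrite mulVf //; apply/negP => /eqP; lra.
have c1 : c <= 1.
  rewrite invf_le1; lra.
set h := (2^-1 : R).
have h0 : 0 <= h by rewrite /h invr_ge0.
have h1 : h <= 1.
  rewrite /h invf_le1; lra.
pose Py n := Pm a u (V (1:R) 1 n.+1).
pose nu n := 1 + Py n.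
pose xs n := V (nu n)^-1 (nu n)^-1 n.+1.
have Py0 : forall n, 0 <= Py n by move=> n; apply: P0.
have Pyhi : forall n, Py n <= p + Pm a u (V (1:R) 0 1) + 0 -> True by [].
have Pyup : forall n, Py n <= p + Pm a u (V 0 (1:R) n.+1).
  move=> n; have := Pvpq 1 1 n.+1; rewrite normr1 !mul1r pm //.
have Pylo : forall n, p <= Py n + Pm a u (V 0 (1:R) n.+1).
  move=> n; rewrite -(pm n.+1).
  have := Psc 0 1 (-1) n.+1; rewrite mulr0 mulN1r normrN normr1 mul1r => <-.
  by apply: Ptri; rewrite ?addr0 ?addrN.
have Py16 : forall n, Py n <= 16.
  move=> n; apply: (@le_trans _ _ (8 * (`|1:R| + `|1:R|) * h^+0)).
    by apply: (Pm_le Ha_pos Ha_incr Ha_l1 (VB (1:R) 1 n.+1)).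
  rewrite normr1 expr0; lra.
have nuB : forall n, [/\ 0 < (nu n)^-1, (nu n)^-1 <= 1 & 17^-1 <= (nu n)^-1].
  move=> n; have := Py0 n; have := Py16 n; rewrite /nu => ha hb.
  split.
    by rewrite invr_gt0; lra.
    by rewrite invf_le1; lra.
  by rewrite lef_pV2 ?posrE; lra.
have diff : forall n, `|(nu n)^-1 - c| <= Pm a u (V 0 (1:R) n.+1).
  move=> n; have := nuB n => -[n0 n1 _].
  have nz1 : 1 + Py n != 0 by rewrite gt_eqF //; have := Py0 n; lra.
  have nz2 : 1 + p != 0 by rewrite gt_eqF //; lra.
  have -> : (nu n)^-1 - c = (p - Py n) * ((nu n)^-1 * c).
    by rewrite /nu /c; field; rewrite ?nz1 ?nz2.
  rewrite normrM.
  have hpy : `|p - Py n| <= Pm a u (V 0 (1:R) n.+1).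
    by rewrite ler_norml; have := Pyup n; have := Pylo n; lra.
  have hn : `|(nu n)^-1 * c| <= 1.
    rewrite normrM !gtr0_norm //; have := mulr_ge0 (ltW n0) (ltW cpos); nra.
  have := normr_ge0 (p - Py n); have := normr_ge0 ((nu n)^-1 * c); nra.
have Nx : read_norm a u (V c 0 1) = 1.
  rewrite read_normE supV ?normr0 ?normr_ge0 // gtr0_norm //.
  have -> : V c 0 1 = V (c * 1) (c * 0) 1 by rewrite mulr1 mulr0.
  rewrite Psc gtr0_norm // -/p.
  rewrite mulrDr mulr1 in hc; lra.
have Nxs : forall n, read_norm a u (xs n) = 1.
  move=> n; have [n0 _ _] := nuB n.
  rewrite read_normE /xs supV // gtr0_norm //.
  have -> : V (nu n)^-1 (nu n)^-1 n.+1 = V ((nu n)^-1 * 1) ((nu n)^-1 * 1) n.+1.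
    by rewrite mulr1.
  rewrite Psc gtr0_norm // -/(Py n).
  have : (nu n)^-1 * nu n = 1 by rewrite mulVf // gt_eqF // -invr_gt0.
  rewrite /nu mulrDr mulr1; lra.
have bound : forall n,
    `|2 - read_norm a u (fun i => V c 0 1 i + xs n i)| <= 10 * Pm a u (V 0 (1:R) n.+1).
  move=> n; have [n0 n1 _] := nuB n.
  set v := (nu n)^-1 in n0 n1 *.
  set e := Pm a u (V 0 (1:R) n.+1).
  have e0 : 0 <= e by apply: P0.
  have -> : (fun i => V c 0 1 i + xs n i) = V (c + v) v n.+1.
    by apply/funext => i; rewrite /xs /V /v; ring.
  rewrite read_normE supV //; last by rewrite !gtr0_norm // ?addr_gt0 // ler_wpDl // ltW.
  rewrite [`|c + v|]gtr0_norm; last by apply: addr_gt0.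
  have h2c : Pm a u (V (2 * c) 0 n.+1) = 2 * c * p.
    have -> : V (2 * c) 0 n.+1 = V ((2 * c) * 1) ((2 * c) * 0) n.+1 by rewrite mulr1 mulr0.
    by rewrite Psc pm gtr0_norm // mulr_gt0.
  have t1 : Pm a u (V (c + v) v n.+1) <= Pm a u (V (2 * c) 0 n.+1) + Pm a u (V (v - c) v n.+1).
    by apply: Ptri; ring.
  have t2 : Pm a u (V (2 * c) 0 n.+1) <= Pm a u (V (c + v) v n.+1) + Pm a u (V (c - v) (- v) n.+1).
    by apply: Ptri; ring.
  have t3 := Pvpq (v - c) v n.+1.
  have t4 := Pvpq (c - v) (- v) n.+1.
  rewrite pm -/e h2c in t1 t2 t3 t4.
  rewrite normrN (gtr0_norm n0) distrC in t4.
  rewrite (gtr0_norm n0) in t3.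
  have d := diff n; rewrite -/v -/e in d.
  have dp : `|v - c| * p <= e * 8 by apply: ler_pM.
  have ve : v * e <= e by rewrite ler_piMl.
  have hc' : c + c * p = 1 by rewrite mulrDr mulr1 in hc.
  have a1 := ler_norm (v - c).
  have a2 : - (v - c) <= `|v - c| by rewrite -normrN ler_norm.
  rewrite ler_norml; apply/andP; split; lra.
have Hs : (read_norm a u (fun i => V c 0 1 i + xs n i) @[n --> \oo] --> (2 : R))%classic.
  apply/cvgrPdist_le => eps eps0.
  have hlt : `|h| < 1 by rewrite ger0_norm // /h invf_lt1 //; lra.
  have := cvg_expr hlt; move=> /cvgrPdist_le /(_ (eps / 80)) hx.
  have e80 : 0 < eps / 80 by rewrite divr_gt0.
  apply: filterS (hx e80) => n; rewrite sub0r normrN => hn.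
  apply: le_trans (bound n) _.
  have := Peps n.+1; rewrite exprS -/h => he.
  have hn0 : 0 <= h ^+ n by rewrite exprn_ge0.
  rewrite ger0_norm // in hn.
  have : h * h ^+ n <= h ^+ n by rewrite ler_piMl.
  have : eps / 80 * 80 = eps by rewrite divfK.
  nra.
have := H (V c 0 1) (V_c0 _ _ _) Nx xs (fun n => V_c0 _ _ _) Nxs Hs.
move=> /cvgrPdist_lt /(_ (20^-1)) hd.
have [N0 _ HN] := hd ltac:(by rewrite invr_gt0).
have := HN N0 (leqnn _); rewrite /= sub0r normrN.
have [v0 _ v17] := nuB N0.
have -> : (fun i => xs N0 i - V c 0 1 i) = V ((nu N0)^-1 - c) (nu N0)^-1 N0.+1.
  by apply/funext => i; rewrite /xs /V; ring.
rewrite read_normE.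
have s1 := supV_ge ((nu N0)^-1 - c) (nu N0)^-1 (ltn0Sn N0).
rewrite gtr0_norm // in s1.
have p1 := P0 ((nu N0)^-1 - c) (nu N0)^-1 N0.+1.
rewrite ger0_norm; last by apply: addr_ge0 => //; apply: le_trans s1; apply: ltW.
have : (20:R)^-1 < 17^-1 by rewrite ltf_pV2 ?posrE //; lra.
lra.
Qed.
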